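(* (a) $\mathcal{A}_<$ is $\boldsymbol{\Sigma}^0_1$ and hence $\mathcal{A}_\ge$ is $\boldsymbol{\Pi}^0_1$; $\mathcal{A}_\le$ is $\boldsymbol{\Pi}^0_2$ and hence $\mathcal{A}_>$ is $\boldsymbol{\Sigma}^0_2$; therefore $\mathcal{A}$ is $\boldsymbol{\Pi}^0_2$. (b) $\mathcal{B}^-_\le$ is $\boldsymbol{\Pi}^0_2$, $\mathcal{B}^-_\ge$ and $\mathcal{B}^+_\ge$ are $\boldsymbol{\Pi}^0_3$, and $\mathcal{B}^+_\le$ is $\boldsymbol{\Pi}^0_4$; therefore $\mathcal{B}^-_>$ is $\boldsymbol{\Sigma}^0_2$, $\mathcal{B}^-_<$ and $\mathcal{B}^+_<$ are $\boldsymbol{\Sigma}^0_3$, and $\mathcal{B}^+_>$ is $\boldsymbol{\Sigma}^0_4$; and $\mathcal{B}$ is $\boldsymbol{\Pi}^0_4$.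
   Context: $2^{\omega}$ is the Cantor space; $N_s=\{x\in2^\omega:s\subset x\}$; $\mu$ is the coin-tossing measure, $\mu(N_s)=2^{-\mathrm{lh}(s)}$. $\mathbf{K}$ is the Polish space of compact subsets of $2^\omega$ with the Vietoris topology; $\omega$ is discrete. For compact $K$ and $z\in2^\omega$: $\mathcal{D}^+_K(z)=\limsup_n\mu(K\cap N_{z\restriction n})/\mu(N_{z\restriction n})$, $\mathcal{D}^-_K(z)=\liminf_n$ of the same, $\mathcal{D}_K(z)$ the limit when it exists. For $\bowtie\in\{<,>,\le,\ge\}$: $\mathcal{A}_\bowtie=\{(K,z,n,r)\in\mathbf{K}\times2^\omega\times\omega\times[0;1]:\mu(K\cap N_{z\restriction n})\bowtie r\}$, $\mathcal{A}=\mathcal{A}_\le\cap\mathcal{A}_\ge$, $\mathcal{B}^\pm_\bowtie=\{(K,z,r)\in\mathbf{K}\times2^\omega\times[0;1]:\mathcal{D}^\pm_K(z)\bowtie r\}$, and $\mathcal{B}=\mathcal{B}^+_\le\cap\mathcal{B}^-_\ge=\{(K,z,r):\mathcal{D}_K(z)=r\}$. *)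

(* Defs.v *)
From HB Require Import structures.
From mathcomp Require Import all_boot all_order all_algebra.
From mathcomp Require Import all_classical all_reals all_analysis.
Set Implicit Arguments. Unset Strict Implicit. Unset Printing Implicit Defensive.
Import Order.TTheory GRing.Theory Num.Theory.
Import numFieldNormedType.Exports.
Local Open Scope classical_set_scope.
Local Open Scope ring_scope.

Definition cyl (s : seq bool) : set cantor_space :=
  [set x | forall i, (i < size s)%N -> x i = nth false s i].

Definition restr (z : cantor_space) (n : nat) : seq bool := mkseq z n.

Section Defs.
Context {R : realType}.

(** The coin-tossing measure mu (as the Caratheodory outer measure generated by
    mu(N_s) = 2^-lh(s) on basic cylinders; it agrees with the coin-tossing
    Borel measure on all Borel sets, in particular on all sets used below). *)
Definition mu (A : set cantor_space) : \bar R :=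
  ereal_inf [set (\sum_(0 <= i <oo) ((2 ^- size (c i) : R)%:E))%E
            | c in [set c : nat -> seq bool | A `<=` \bigcup_i cyl (c i)]].

Definition Kspace := {K : set cantor_space | compact K}.

Definition I01 := {r : R | 0 <= r <= 1}.

End Defs.
Arguments I01 R : clear implicits.

Section Hierarchy.
Context {T : Type}.

Definition gen_open (S : set (set T)) (A : set T) : Prop :=
  forall x, A x -> exists n (F : nat -> set T),
    (forall i, (i < n)%N -> S (F i) /\ F i x) /\
    (forall y, (forall i, (i < n)%N -> F i y) -> A y).

(** SigmaAux O m = Sigma^0_(m+1) of the topology whose open sets are O. *)
Fixpoint SigmaAux (O : set (set T)) (m : nat) : set (set T) :=
  match m with
  | 0 => O
  | m.+1 => [set A | exists F : nat -> set T,
                (forall i, SigmaAux O m (~` F i)) /\ A = \bigcup_i F i]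
  end.

(** Sigma^0_n and Pi^0_n, for n >= 1. *)
Definition Sigma0 (O : set (set T)) (n : nat) : set (set T) := SigmaAux O n.-1.
Definition Pi0 (O : set (set T)) (n : nat) : set (set T) :=
  [set A | Sigma0 O n (~` A)].
End Hierarchy.

Definition vietoris_sub : set (set Kspace) :=
  [set V | exists U : set cantor_space, open U /\
     (V = [set K : Kspace | proj1_sig K `<=` U] \/
      V = [set K : Kspace | proj1_sig K `&` U !=set0])].

Section Spaces.
Context {R : realType}.

(** K x 2^omega x omega x [0;1] with the product topology (omega discrete,
    [0;1] with the subspace topology of R). *)
Definition XA := (Kspace * cantor_space * nat * I01 R)%type.

Definition XA_sub : set (set XA) :=
  [set V | (exists W, vietoris_sub W /\ V = [set p : XA | W p.1.1.1])
        \/ (exists U : set cantor_space, open U /\ V = [set p : XA | U p.1.1.2])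
        \/ (exists N : set nat, V = [set p : XA | N p.1.2])
        \/ (exists U : set R, open U /\ V = [set p : XA | U (proj1_sig p.2)])].

Definition XA_open : set (set XA) := gen_open XA_sub.

Definition XB := (Kspace * cantor_space * I01 R)%type.

Definition XB_sub : set (set XB) :=
  [set V | (exists W, vietoris_sub W /\ V = [set p : XB | W p.1.1])
        \/ (exists U : set cantor_space, open U /\ V = [set p : XB | U p.1.2])
        \/ (exists U : set R, open U /\ V = [set p : XB | U (proj1_sig p.2)])].

Definition XB_open : set (set XB) := gen_open XB_sub.

Local Notation muKN p := (@mu R (proj1_sig p.1.1.1 `&` cyl (restr p.1.1.2 p.1.2))).

Definition A_lt : set XA := [set p | (muKN p < (proj1_sig p.2)%:E)%E].
Definition A_gt : set XA := [set p | (muKN p > (proj1_sig p.2)%:E)%E].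
Definition A_le : set XA := [set p | (muKN p <= (proj1_sig p.2)%:E)%E].
Definition A_ge : set XA := [set p | (muKN p >= (proj1_sig p.2)%:E)%E].
Definition A_eq : set XA := A_le `&` A_ge.

Definition dratio (K : set cantor_space) (z : cantor_space) (n : nat) : \bar R :=
  (fine (@mu R (K `&` cyl (restr z n))) / fine (@mu R (cyl (restr z n))))%:E.

Definition Dplus (K : set cantor_space) (z : cantor_space) : \bar R :=
  limn_esup (dratio K z).
Definition Dminus (K : set cantor_space) (z : cantor_space) : \bar R :=
  limn_einf (dratio K z).

Definition Bplus_lt : set XB := [set p | (Dplus (proj1_sig p.1.1) p.1.2 < (proj1_sig p.2)%:E)%E].
Definition Bplus_gt : set XB := [set p | (Dplus (proj1_sig p.1.1) p.1.2 > (proj1_sig p.2)%:E)%E].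
Definition Bplus_le : set XB := [set p | (Dplus (proj1_sig p.1.1) p.1.2 <= (proj1_sig p.2)%:E)%E].
Definition Bplus_ge : set XB := [set p | (Dplus (proj1_sig p.1.1) p.1.2 >= (proj1_sig p.2)%:E)%E].
Definition Bminus_lt : set XB := [set p | (Dminus (proj1_sig p.1.1) p.1.2 < (proj1_sig p.2)%:E)%E].
Definition Bminus_gt : set XB := [set p | (Dminus (proj1_sig p.1.1) p.1.2 > (proj1_sig p.2)%:E)%E].
Definition Bminus_le : set XB := [set p | (Dminus (proj1_sig p.1.1) p.1.2 <= (proj1_sig p.2)%:E)%E].
Definition Bminus_ge : set XB := [set p | (Dminus (proj1_sig p.1.1) p.1.2 >= (proj1_sig p.2)%:E)%E].
Definition B_eq : set XB := Bplus_le `&` Bminus_ge.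

End Spaces.
Arguments XA R : clear implicits.
Arguments XB R : clear implicits.

(* Main.v *)
Require Import Defs.
From HB Require Import structures.
From mathcomp Require Import all_boot all_order all_algebra.
From mathcomp Require Import all_classical all_reals all_analysis.
From mathcomp Require Import ring lra.
Set Implicit Arguments. Unset Strict Implicit. Unset Printing Implicit Defensive.
Import Order.TTheory GRing.Theory Num.Theory.
Import numFieldNormedType.Exports.
Local Open Scope classical_set_scope.
Local Open Scope ring_scope.

Lemma proj_pre_open (n : nat) (B : set bool) : open [set x : cantor_space | B (x n)].
Proof.
have := @open_comp cantor_space bool (fun x => x n) B.
apply. move=> x _; exact: (@proj_continuous nat (fun _ => bool) n).
exact: discrete_open.
Qed.

Lemma cylA_open_closed (n : nat) (b : nat -> bool) :
  open [set x : cantor_space | forall i, (i < n)%N -> x i = b i] /\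
  closed [set x : cantor_space | forall i, (i < n)%N -> x i = b i].
Proof.
elim: n => [|n [IHo IHc]].
  have -> : [set x : cantor_space | forall i, (i < 0)%N -> x i = b i] = setT.
    by apply/seteqP; split => x //.
  by split; [exact: openT | exact: closedT].
have -> : [set x : cantor_space | forall i, (i < n.+1)%N -> x i = b i] =
  [set x : cantor_space | forall i, (i < n)%N -> x i = b i] `&` [set x : cantor_space | [set y | y = b n] (x n)].
  apply/seteqP; split => x /=.
    move=> H; split; first by move=> i Hi; apply: H; apply: ltnW.
    by apply: H.
  move=> [H H2] i; rewrite ltnS leq_eqVlt => /orP[/eqP->//|]; exact: H.
split; first exact: (openI IHo (proj_pre_open n [set y | y = b n])).
apply: (closedI IHc). rewrite -openC.
exact: (proj_pre_open n (~` [set y | y = b n])).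
Qed.

Section Meas.
Context {R : realType}.

Definition wL (L : seq (seq bool)) : R := \sum_(0 <= i < size L) 2 ^- size (nth [::] L i).
Definition covL (L : seq (seq bool)) : set cantor_space :=
  [set x | exists2 i, (i < size L)%N & cyl (nth [::] L i) x].

Lemma mu_ge0 (A : set cantor_space) : (0 <= @mu R A)%E.
Proof.
apply: le_ereal_inf_tmp => _ [c _ <-]; apply: nneseries_ge0 => n _ _.
by rewrite lee_fin invr_ge0 exprn_ge0.
Qed.

Lemma geom_sum (k N : nat) :
  \sum_(0 <= i < N) (2 ^- (i + k).+1 : R) = 2 ^- k - 2 ^- (N + k).
Proof.
elim: N => [|N IH]; first by rewrite big_geq // add0n subrr.
rewrite big_nat_recr //= IH -addrA; congr (_ + _).
by rewrite addSn -!exprVn exprS; field.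
Qed.


Definition aL (L : seq (seq bool)) (i : nat) : R :=
  if (i < size L)%N then 2 ^- size (nth [::] L i) else 0.

Lemma aL_ge0 L i : 0 <= aL L i.
Proof. by rewrite /aL; case: ifP => // _; rewrite invr_ge0 exprn_ge0. Qed.

Lemma sum_aL_le L N : \sum_(0 <= i < N) aL L i <= wL L.
Proof.
have E : wL L = \sum_(0 <= i < size L) aL L i.
  by apply: eq_big_nat => i /andP[_ hi]; rewrite /aL hi.
rewrite E; case: (leqP N (size L)) => hN.
  rewrite [X in _ <= X](big_cat_nat (leq0n N) hN) /= lerDl.
  by apply: sumr_ge0 => i _; exact: aL_ge0.
rewrite (big_cat_nat (leq0n (size L)) (ltnW hN)) /= [X in _ + X]big1_seq ?addr0 //.
by move=> i /andP[_]; rewrite mem_index_iota => /andP[h _]; rewrite /aL ltnNge h.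
Qed.

Lemma two_pow_small (e : R) : 0 < e -> exists k, (2 ^- k : R) < e.
Proof.
move=> e0; have [k hk] := ltr_add_invr e0; exists k; apply: le_lt_trans hk.
rewrite add0r lef_pV2 ?posrE ?exprn_gt0 ?ltr0Sn //.
by rewrite -natrX ler_nat; exact: ltn_expl.
Qed.

Lemma mu_le_wL (A : set cantor_space) L : A `<=` covL L -> (@mu R A <= (wL L)%:E)%E.
Proof.
move=> AL; apply/lee_addgt0Pr => e e0.
have [k hk] := two_pow_small e0.
pose c := fun i => if (i < size L)%N then nth [::] L i else nseq (i + k).+1 false.
apply: (@le_trans _ _ (\sum_(0 <= i <oo) ((2 ^- size (c i) : R))%:E)%E).
  apply: ereal_inf_lbound; exists c => //.
  by move=> x /AL [i hi hx]; exists i => //; rewrite /c hi.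
apply: lime_le; first by apply: is_cvg_nneseries => n _ _; rewrite lee_fin invr_ge0 exprn_ge0.
apply: nearW => N /=; rewrite sumEFin lee_fin.
apply: (@le_trans _ _ (\sum_(0 <= i < N) (aL L i + 2 ^- (i + k).+1))).
  apply: ler_sum => i _; rewrite /c /aL; case: ifP => hi.
    by rewrite lerDl invr_ge0 exprn_ge0.
  by rewrite size_nseq add0r.
rewrite big_split /= geom_sum; apply: lerD; first exact: sum_aL_le.
have : 0 <= (2 ^- (N + k) : R) by rewrite invr_ge0 exprn_ge0.
move: hk; lra.
Qed.


Lemma cyl_open s : open (cyl s).
Proof. exact: (cylA_open_closed (size s) (fun j => nth false s j)).1. Qed.
Lemma cyl_closed s : closed (cyl s).
Proof. exact: (cylA_open_closed (size s) (fun j => nth false s j)).2. Qed.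

Lemma seq_bound (s : seq nat) : exists N, forall i, i \in s -> (i < N)%N.
Proof.
elim: s => [|a s [N hN]]; first by exists 0.
exists (maxn a.+1 N) => i; rewrite inE => /orP[/eqP->|/hN h].
  exact: leq_maxl.
exact: (leq_trans h (leq_maxr _ _)).
Qed.

Lemma mu_lt_wL (A : set cantor_space) (c : R) : compact A -> (@mu R A < c%:E)%E ->
  exists L, A `<=` covL L /\ wL L < c.
Proof.
move=> cA /ereal_inf_lt [_ [cc hcov <-] hlt].
move: cA; rewrite compact_cover => /(_ nat setT (fun i => cyl (cc i))).
case.
- by move=> i _; exact: cyl_open.
- by move=> x /hcov [i _ hi]; exists i.
move=> D' _ hD.
have [N hN] := seq_bound (finmap.enum_fset D').
exists (mkseq cc N); split.
  move=> x /hD [i /= hi hx]; exists i; rewrite ?size_mkseq ?nth_mkseq //; exact: hN.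
rewrite -lte_fin; apply: le_lt_trans hlt.
have -> : wL (mkseq cc N) = \sum_(0 <= i < N) 2 ^- size (cc i).
  by rewrite /wL size_mkseq; apply: eq_big_nat => i /andP[_ h]; rewrite nth_mkseq.
rewrite -sumEFin; apply: nneseries_lim_ge => n _ _.
by rewrite lee_fin invr_ge0 exprn_ge0.
Qed.

Lemma mu_le1 (A : set cantor_space) : (@mu R A <= 1%:E)%E.
Proof.
have -> : (1 : R) = wL [:: [::]] by rewrite /wL big_nat1 /= expr0 invr1.
apply: mu_le_wL => x _; exists 0%N => //= i.
Qed.

End Meas.

Section Seqs.
Context {R : realType}.

Lemma rat_between (a b : R) : a < b -> exists q : rat, a < ratr q < b.
Proof. by move=> /rat_in_itvoo [q]; rewrite in_itv /= => h; exists q. Qed.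

Lemma erat_between (x y : \bar R) : (x < y)%E -> exists q : rat, (x < (ratr q)%:E < y)%E.
Proof.
case: x => [a||]; case: y => [b||] //= hxy.
- by have [q /andP[h1 h2]] := rat_between hxy; exists q; rewrite !lte_fin h1 h2.
- have h : a < a + 1 by lra.
  by have [q /andP[h1 h2]] := rat_between h; exists q; rewrite lte_fin h1 ltey.
- have h : b - 1 < b by lra.
  by have [q /andP[h1 h2]] := rat_between h; exists q; rewrite lte_fin h2 ltNye.
- have h : (0:R) < 1 by lra.
  by have [q /andP[h1 h2]] := rat_between h; exists q; rewrite ltey ltNye.
Qed.

Lemma Dm_eq (u : nat -> R) :
  limn_einf (fun n => (u n)%:E) = ereal_sup (range (einfs (fun n => (u n)%:E))).
Proof. by rewrite limn_einf_lim; apply: cvg_lim => //; exact: cvg_einfs_sup. Qed.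

Lemma Dp_eq (u : nat -> R) :
  limn_esup (fun n => (u n)%:E) = ereal_inf (range (esups (fun n => (u n)%:E))).
Proof. by rewrite limn_esup_lim; apply: cvg_lim => //; exact: cvg_esups_inf. Qed.


Local Notation E u := (fun n : nat => (u n)%:E).

Lemma D2 (u : nat -> R) (x : R) :
  (limn_einf (E u) < x%:E)%E <->
  exists q : rat, ratr q < x /\ forall m, exists n, (m <= n)%N /\ u n < ratr q.
Proof.
rewrite Dm_eq; split.
  move=> /erat_between [q /andP[h1 h2]]; exists q; split; first by rewrite -lte_fin.
  move=> m.
  have : (einfs (E u) m < (ratr q)%:E)%E.
    by apply: le_lt_trans h1; apply: ereal_sup_ubound; exists m.
  by move=> /ereal_inf_lt [_ [k /= hk <-]]; rewrite lte_fin => hk2; exists k.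
move=> [q [hq H]]; apply: (@le_lt_trans _ _ (ratr q)%:E); last by rewrite lte_fin.
apply: ge_ereal_sup => _ [m _ <-].
have [n [hn hu]] := H m.
apply: (@le_trans _ _ (u n)%:E); last by rewrite lee_fin ltW.
by apply: ereal_inf_lbound; exists n.
Qed.

Lemma D1 (u : nat -> R) (x : R) :
  (x%:E < limn_einf (E u))%E <->
  exists q' q : rat, x <= (ratr q' : R) /\ (ratr q' : R) < ratr q /\
    exists m, forall n, (m <= n)%N -> ratr q <= u n.
Proof.
rewrite Dm_eq; split.
  move=> /erat_between [q' /andP[h1 h2]].
  move: h2 => /erat_between [q /andP[h3 h4]].
  exists q', q; split; first by rewrite -lee_fin ltW.
  split; first by rewrite -lte_fin.
  move: h4 => /ereal_sup_gt [_ [m _ <-]] hm; exists m => n hn.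
  rewrite -lee_fin; apply: (le_trans (ltW hm)).
  by apply: ereal_inf_lbound; exists n.
move=> [q' [q [h1 [h2 [m H]]]]].
apply: (@le_lt_trans _ _ (ratr q')%:E); first by rewrite lee_fin.
apply: (@lt_le_trans _ _ (ratr q)%:E); first by rewrite lte_fin.
apply: (@le_trans _ _ (einfs (E u) m)); last by apply: ereal_sup_ubound; exists m.
by apply: le_ereal_inf_tmp => _ [n /= hn <-]; rewrite lee_fin; exact: H.
Qed.

Lemma D3 (u : nat -> R) (x : R) :
  (limn_esup (E u) < x%:E)%E <->
  exists (q : rat) (m : nat), ratr q < x /\ forall n, (m <= n)%N -> u n <= ratr q.
Proof.
rewrite Dp_eq; split.
  move=> /erat_between [q /andP[h1 h2]]; exists q.
  move: h1 => /ereal_inf_lt [_ [m _ <-]] hm; exists m; split; first by rewrite -lte_fin.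
  move=> n hn; rewrite -lee_fin; apply: (le_trans _ (ltW hm)).
  by apply: ereal_sup_ubound; exists n.
move=> [q [m [hq H]]]; apply: (@le_lt_trans _ _ (ratr q)%:E); last by rewrite lte_fin.
apply: (@le_trans _ _ (esups (E u) m)); first by apply: ereal_inf_lbound; exists m.
by apply: ge_ereal_sup => _ [n /= hn <-]; rewrite lee_fin; exact: H.
Qed.

Lemma D4 (u : nat -> R) (x : R) :
  (x%:E < limn_esup (E u))%E <->
  exists q : rat, x < ratr q /\ forall m, exists n, (m <= n)%N /\ ratr q < u n.
Proof.
rewrite Dp_eq; split.
  move=> /erat_between [q /andP[h1 h2]]; exists q; split; first by rewrite -lte_fin.
  move=> m.
  have : ((ratr q)%:E < esups (E u) m)%E.
    by apply: (lt_le_trans h2); apply: ereal_inf_lbound; exists m.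
  by move=> /ereal_sup_gt [_ [k /= hk <-]]; rewrite lte_fin => hk2; exists k.
move=> [q [hq H]]; apply: (@lt_le_trans _ _ (ratr q)%:E); first by rewrite lte_fin.
apply: le_ereal_inf_tmp => _ [m _ <-].
have [n [hn hu]] := H m.
apply: (@le_trans _ _ (u n)%:E); first by rewrite lee_fin ltW.
by apply: ereal_sup_ubound; exists n.
Qed.

End Seqs.

Section Gen.
Context {T : Type} (S : set (set T)).

Lemma go_local (A : set T) :
  (forall x, A x -> exists B, gen_open S B /\ B x /\ B `<=` A) -> gen_open S A.
Proof.
move=> H x Ax; have [B [oB [Bx BA]]] := H x Ax.
have [n [F [h1 h2]]] := oB x Bx.
by exists n, F; split => // y hy; apply: BA; apply: h2.
Qed.

Lemma go_sub V : S V -> gen_open S V.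
Proof. by move=> SV x Vx; exists 1%N, (fun _ => V); split => [i _|y /(_ 0%N)]; [|apply]. Qed.

Lemma go_T : gen_open S setT.
Proof. by move=> x _; exists 0%N, (fun _ => setT); split. Qed.

Lemma go_0 : gen_open S set0.
Proof. by move=> x []. Qed.

Lemma go_I A B : gen_open S A -> gen_open S B -> gen_open S (A `&` B).
Proof.
move=> oA oB x [Ax Bx].
have [n1 [F1 [h1 h1']]] := oA x Ax; have [n2 [F2 [h2 h2']]] := oB x Bx.
exists (n1 + n2)%N, (fun i => if (i < n1)%N then F1 i else F2 (i - n1)%N); split.
  move=> i hi; case: ifP => hi1; first exact: h1.
  by apply: h2; rewrite ltn_subLR // leqNgt hi1.
move=> y hy; split.
  by apply: h1' => i hi; have := hy i (ltn_addr _ hi); rewrite hi.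
apply: h2' => i hi; have e1 : (i + n1 < n1)%N = false by rewrite ltnNge leq_addl.
have := hy (i + n1)%N; rewrite e1 addnK.
by apply; rewrite addnC ltn_add2l.
Qed.

Lemma go_U A B : gen_open S A -> gen_open S B -> gen_open S (A `|` B).
Proof.
move=> oA oB; apply: go_local => x [Ax|Bx].
  by exists A; split => //; split => // y; left.
by exists B; split => //; split => // y; right.
Qed.

Lemma go_bigcup (I : Type) (F : I -> set T) :
  (forall i, gen_open S (F i)) -> gen_open S (\bigcup_i F i).
Proof.
move=> oF; apply: go_local => x [i _ Fx].
by exists (F i); split => //; split => // y Fy; exists i.
Qed.

Definition gc (A : set T) := gen_open S (~` A).

Lemma gc_I A B : gc A -> gc B -> gc (A `&` B).
Proof. by move=> cA cB; rewrite /gc setCI; exact: go_U. Qed.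

Lemma gc_U A B : gc A -> gc B -> gc (A `|` B).
Proof. by move=> cA cB; rewrite /gc setCU; exact: go_I. Qed.

Lemma gc_bigcap (I : Type) (F : I -> set T) :
  (forall i, gc (F i)) -> gc (\bigcap_i F i).
Proof. by move=> cF; rewrite /gc setC_bigcap; exact: go_bigcup. Qed.

Lemma gc_const (P : Prop) : gc [set _ | P].
Proof.
rewrite /gc; case: (pselect P) => hP.
  have -> : ~` [set _ : T | P] = set0 by apply/seteqP; split => x //=.
  exact: go_0.
have -> : ~` [set _ : T | P] = setT by apply/seteqP; split => x //=.
exact: go_T.
Qed.

Lemma gc_T : gc setT.
Proof. by rewrite /gc setCT; exact: go_0. Qed.

Lemma gc_eq A B : A = B -> gc A -> gc B.
Proof. by move=> ->. Qed.

Lemma Sig_T0 m : SigmaAux (gen_open S) m setT /\ SigmaAux (gen_open S) m set0.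
Proof.
elim: m => [|m [IH1 IH2]]; first by split; [exact: go_T|exact: go_0].
split.
  exists (fun _ => setT); split; first by move=> _; rewrite setCT.
  by apply/seteqP; split => x // _; exists 0%N.
exists (fun _ => set0); split; first by move=> _; rewrite setC0.
by apply/seteqP; split => x // [].
Qed.

Lemma Sig_cup (I : countType) m (F : I -> set T) (A : set T) :
  (forall i, SigmaAux (gen_open S) m (~` F i)) ->
  (forall x, A x <-> exists i, F i x) ->
  SigmaAux (gen_open S) m.+1 A.
Proof.
move=> HF HA.
exists (fun n => if unpickle n is Some i then F i else set0); split.
  move=> n; case: (unpickle n) => [i|]; first exact: HF.
  by rewrite setC0; exact: (Sig_T0 m).1.
apply/seteqP; split => x.
  move=> /HA [i Fi]; exists (pickle i) => //; by rewrite pickleK.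
move=> [n _]; case: (unpickle n) => [i Fi|//]; apply/HA; by exists i.
Qed.

End Gen.

Lemma restr_of_cyl (s : seq bool) (z : cantor_space) n :
  cyl s z -> size s = n -> restr z n = s.
Proof.
move=> hz hs; apply: (@eq_from_nth _ false); rewrite size_mkseq ?hs // => i hi.
by rewrite nth_mkseq // hz // hs.
Qed.

Lemma cyl_restr (z : cantor_space) n : cyl (restr z n) z.
Proof. by move=> i; rewrite size_mkseq => hi; rewrite nth_mkseq. Qed.

Lemma restr_eq (z z' : cantor_space) n : cyl (restr z n) z' -> restr z' n = restr z n.
Proof. by move=> h; apply: restr_of_cyl => //; rewrite size_mkseq. Qed.

Lemma covL_open L : open (covL L).
Proof.
have -> : covL L = \bigcup_(i in `I_(size L)) cyl (nth [::] L i).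
  by apply/seteqP; split => x [i hi hx]; exists i.
by apply: bigcup_open => i _; exact: cyl_open.
Qed.

Lemma covL_closed L : closed (covL L).
Proof.
have -> : covL L = \bigcup_(i in `I_(size L)) cyl (nth [::] L i).
  by apply/seteqP; split => x [i hi hx]; exists i.
by apply: closed_bigcup => [|i _]; [exact: finite_II|exact: cyl_closed].
Qed.

Section Mfun.
Context {R : realType}.

Definition MM (s : seq bool) (K : set cantor_space) : R := fine (@mu R (K `&` cyl s)).
Definition ee (s : seq bool) : R := (fine (@mu R (cyl s)))^-1.

Lemma mu_fin (A : set cantor_space) : (fine (@mu R A))%:E = @mu R A.
Proof.
rewrite fineK // ge0_fin_numE ?mu_ge0 //.
exact: (le_lt_trans (mu_le1 A) (ltey _)).
Qed.

Lemma ee_ge0 s : 0 <= ee s.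
Proof. by rewrite /ee invr_ge0 fine_ge0 // mu_ge0. Qed.

Lemma MM_KEY (K : set cantor_space) s (c : R) : compact K ->
  (MM s K < c <-> exists L, K `&` cyl s `<=` covL L /\ wL L < c).
Proof.
move=> cK; split.
  move=> h; apply: (mu_lt_wL (compact_closedI cK (@cyl_closed s))).
  by rewrite -mu_fin lte_fin.
move=> [L [hL hw]]; rewrite -lte_fin /MM mu_fin.
exact: (le_lt_trans (mu_le_wL hL) _).
Qed.

Lemma MM_le (K : set cantor_space) s L : K `&` cyl s `<=` covL L -> MM s K <= wL L.
Proof. by move=> hL; rewrite -lee_fin /MM mu_fin; exact: mu_le_wL. Qed.

End Mfun.

Lemma not_subsetP T (A B : set T) : ~ (A `<=` B) <-> (A `&` ~` B) !=set0.
Proof.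
split.
  move=> h; apply: contrapT => h2; apply: h => x Ax; apply: contrapT => nB.
  by apply: h2; exists x.
by move=> [x [Ax nBx]] h; exact: nBx (h x Ax).
Qed.

Section XBsec.
Context {R : realType}.
Local Notation OB := (@XB_sub R).

Definition Kof (p : XB R) : set cantor_space := proj1_sig p.1.1.
Lemma Kof_compact p : compact (Kof p). Proof. exact: (proj2_sig p.1.1). Qed.
Definition rof (p : XB R) : R := proj1_sig p.2.
Definition G n (p : XB R) : R := MM (restr p.1.2 n) (Kof p) * ee (restr p.1.2 n).

Lemma dratio_G p n : @dratio R (Kof p) p.1.2 n = (G n p)%:E.
Proof. by []. Qed.

Lemma XB_Ksub U : open U -> gen_open OB [set p | Kof p `<=` U].
Proof.
move=> oU; apply: go_sub; left; exists [set K : Kspace | proj1_sig K `<=` U].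
by split => //; exists U; split => //; left.
Qed.

Lemma XB_Kmeet U : open U -> gen_open OB [set p | Kof p `&` U !=set0].
Proof.
move=> oU; apply: go_sub; left; exists [set K : Kspace | proj1_sig K `&` U !=set0].
by split => //; exists U; split => //; right.
Qed.

Lemma XB_z U : open U -> gen_open OB [set p | U p.1.2].
Proof. by move=> oU; apply: go_sub; right; left; exists U. Qed.

Lemma XB_r U : open U -> gen_open OB [set p | U (rof p)].
Proof. by move=> oU; apply: go_sub; right; right; exists U. Qed.

Lemma gc_r_le c : gc OB [set p | rof p <= c].
Proof.
rewrite /gc; have -> : ~` [set p | rof p <= c] = [set p | [set x | c < x] (rof p)].
  by apply/seteqP; split => p /=; rewrite ltNge => /negP.
apply: XB_r; exact: open_gt.
Qed.

Lemma gc_r_ge c : gc OB [set p | c <= rof p].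
Proof.
rewrite /gc; have -> : ~` [set p | c <= rof p] = [set p | [set x | x < c] (rof p)].
  by apply/seteqP; split => p /=; rewrite ltNge => /negP.
apply: XB_r; exact: open_lt.
Qed.

Lemma gc_z s : gc OB [set p | cyl s p.1.2].
Proof. by apply: (XB_z (U := ~` cyl s)); rewrite openC; exact: cyl_closed. Qed.

Lemma gc_cov s L : gc OB [set p | Kof p `&` cyl s `<=` covL L].
Proof.
rewrite /gc; have -> : ~` [set p | Kof p `&` cyl s `<=` covL L] =
    [set p | Kof p `&` (cyl s `&` ~` covL L) !=set0].
  apply/seteqP; split => p /=.
    move=> h; apply: contrapT => h2; apply: h => x [Kx cx]; apply: contrapT => nx.
    by apply: h2; exists x.
  by move=> [x [Kx [cx nx]]] h; exact: nx (h x (conj Kx cx)).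
apply: XB_Kmeet; apply: openI; first exact: cyl_open.
by rewrite openC; exact: covL_closed.
Qed.

Lemma go_G_lt n t : gen_open OB [set p | G n p < t].
Proof.
apply: go_local => p hp; set s := restr p.1.2 n.
have rs : forall p' : XB R, cyl s p'.1.2 -> restr p'.1.2 n = s by move=> p' h; exact: restr_eq.
have [he|he] := eqVneq (@ee R s) 0.
  exists [set p' | cyl s p'.1.2]; split; first exact: XB_z (@cyl_open s).
  split; first exact: cyl_restr.
  by move=> p' /rs hp'; move: hp; rewrite /G /= hp' -/s he !mulr0.
have hpos : 0 < @ee R s by rewrite lt_neqAle eq_sym he ee_ge0.
have : @MM R s (Kof p) < t / @ee R s by rewrite ltr_pdivlMr.
move=> /(MM_KEY _ _ (Kof_compact (p:=p))) [L [hL hw]].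
exists ([set p' | cyl s p'.1.2] `&` [set p' | Kof p' `<=` covL L `|` ~` cyl s]).
split.
  apply: go_I; first exact: XB_z (@cyl_open s).
  by apply: XB_Ksub; apply: openU; [exact: covL_open|rewrite openC; exact: cyl_closed].
split.
  split; first exact: cyl_restr.
  move=> x Kx; case: (pselect (cyl s x)) => hx; last by right.
  by left; apply: hL.
move=> p' [/rs hp' hK]; rewrite /G /= hp' -/s -ltr_pdivlMr //.
apply: le_lt_trans hw; apply: MM_le => x [Kx cx].
by case: (hK x Kx).
Qed.

Lemma gc_G_ge n t : gc OB [set p | t <= G n p].
Proof.
rewrite /gc; have -> : ~` [set p | t <= G n p] = [set p | G n p < t].
  by apply/seteqP; split => p /=; rewrite ltNge => /negP.
exact: go_G_lt.
Qed.


Lemma gc_imp (P : Prop) (A : set (XB R)) : gc OB A -> gc OB [set p | P -> A p].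
Proof.
move=> cA; case: (pselect P) => hP.
  by apply: (gc_eq _ cA); apply/seteqP; split => p /=; [move=> ? _|apply].
by apply: (gc_eq _ (@gc_T _ OB)); apply/seteqP; split => p //= _.
Qed.

Definition Cset n t (sL : seq bool * seq (seq bool)) : set (XB R) :=
  [set p | cyl sL.1 p.1.2] `&` ([set _ | size sL.1 = n] `&`
   ([set _ | @ee R sL.1 = 0 /\ 0 < t] `|`
    ([set _ | 0 < @ee R sL.1 /\ wL sL.2 * @ee R sL.1 < t] `&`
     [set p | Kof p `&` cyl sL.1 `<=` covL sL.2]))).

Lemma gc_Cset n t sL : gc OB (Cset n t sL).
Proof.
apply: gc_I; first exact: gc_z.
apply: gc_I; first exact: gc_const.
apply: gc_U; first exact: gc_const.
apply: gc_I; first exact: gc_const.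
exact: gc_cov.
Qed.

Lemma G_lt_iff n t p : G n p < t <-> exists sL, Cset n t sL p.
Proof.
split.
  move=> hp; set s := restr p.1.2 n.
  have [he|he] := eqVneq (@ee R s) 0.
    exists (s, [::]); split; first exact: cyl_restr.
    split; first by rewrite size_mkseq.
    by left; split => //; move: hp; rewrite /G -/s he mulr0.
  have hpos : 0 < @ee R s by rewrite lt_neqAle eq_sym he ee_ge0.
  have : @MM R s (Kof p) < t / @ee R s by rewrite ltr_pdivlMr.
  move=> /(MM_KEY _ _ (Kof_compact (p:=p))) [L [hL hw]].
  exists (s, L); split; first exact: cyl_restr.
  split; first by rewrite size_mkseq.
  by right; split => //; split => //; rewrite -ltr_pdivlMr.
move=> [[s L] [/= hz [hs H]]].
rewrite /G (restr_of_cyl hz hs).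
case: H => [[he ht]|[[hpos hw] hcov]]; first by rewrite he mulr0.
apply: le_lt_trans hw; apply: ler_wpM2r; first exact: ee_ge0.
exact: MM_le.
Qed.

End XBsec.

Lemma Sig_cup' {T : Type} (S : set (set T)) (I : countType) m (F : I -> set T) (A : set T) :
  (forall x, A x <-> exists i, F i x) ->
  (forall i, SigmaAux (gen_open S) m (~` F i)) ->
  SigmaAux (gen_open S) m.+1 A.
Proof. by move=> HA HF; exact: (Sig_cup HF HA). Qed.

Section Bpart.
Context {R : realType}.
Local Notation OB := (@XB_sub R).

Lemma Bm_gt_iff (p : XB R) : @Bminus_gt R p <->
  exists i : rat * rat * nat, ([set p | rof p <= ratr i.1.1] `&`
    ([set _ | (ratr i.1.1 : R) < ratr i.1.2] `&`
     \bigcap_(n : nat) [set p | (i.2 <= n)%N -> ratr i.1.2 <= G n p])) p.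
Proof.
rewrite /Bminus_gt /Dminus /=.
change (dratio (proj1_sig p.1.1) p.1.2) with (fun n => (G n p)%:E).
apply: iff_trans (D1 _ _) _; split.
  move=> [q' [q [h1 [h2 [m H]]]]]; exists (q', q, m); split => //; split => //.
  by move=> n _ hn; exact: H.
move=> [[[q' q] m] [/= h1 [h2 H]]]; exists q', q; split => //; split => //.
by exists m => n hn; exact: H.
Qed.

Lemma S_Bm_gt : Sigma0 (@XB_open R) 2 (@Bminus_gt R).
Proof.
change (SigmaAux (gen_open OB) 1 (@Bminus_gt R)).
apply: (Sig_cup' (S := OB) (m := 0%N) Bm_gt_iff) => i.
apply: gc_I; first exact: gc_r_le.
apply: gc_I; first exact: gc_const.
by apply: gc_bigcap => n; apply: gc_imp; exact: gc_G_ge.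
Qed.


Lemma setC_lee (T : Type) (f g : T -> \bar R) :
  ~` [set p | (f p <= g p)%E] = [set p | (g p < f p)%E].
Proof. by apply/seteqP; split => p /=; rewrite ltNge => /negP. Qed.

Lemma P_Bm_le : Pi0 (@XB_open R) 2 (@Bminus_le R).
Proof.
change (Sigma0 (@XB_open R) 2 (~` @Bminus_le R)).
by rewrite /Bminus_le setC_lee; exact: S_Bm_gt.
Qed.

Definition Fminus (q : rat) : set (XB R) :=
  [set p | ratr q < rof p] `&` \bigcap_(m : nat) [set p | exists n, (m <= n)%N /\ G n p < ratr q].

Lemma Bm_lt_iff (p : XB R) : @Bminus_lt R p <-> exists q : rat, Fminus q p.
Proof.
rewrite /Bminus_lt /Dminus /=.
change (dratio (proj1_sig p.1.1) p.1.2) with (fun n => (G n p)%:E).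
apply: iff_trans (D2 _ _) _; split.
  by move=> [q [h1 H]]; exists q; split => // m _; exact: H.
by move=> [q [h1 H]]; exists q; split => // m; exact: H.
Qed.

Definition FminusC (q : rat) (o : option nat) : set (XB R) :=
  if o is Some m then \bigcap_(n : nat) [set p | (m <= n)%N -> ratr q <= G n p]
  else [set p | rof p <= ratr q].

Lemma FminusC_iff q p : (~` Fminus q) p <-> exists o, FminusC q o p.
Proof.
split.
  move=> h; case: (lerP (rof p) (ratr q)) => hr; first by exists None.
  apply: contrapT => hno; apply: h; split => // m _; apply: contrapT => hm.
  apply: hno; exists (Some m) => n _ hn; rewrite leNgt; apply/negP => hlt.
  by apply: hm; exists n.
move=> [[m|] H] [hq Hall].
  have [n [hn hlt]] := Hall m I; have := H n I hn; rewrite leNgt hlt //.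
by move: H => /=; rewrite leNgt hq.
Qed.

Lemma S_Bm_lt : Sigma0 (@XB_open R) 3 (@Bminus_lt R).
Proof.
change (SigmaAux (gen_open OB) 2 (@Bminus_lt R)).
apply: (Sig_cup' (S := OB) (m := 1%N) Bm_lt_iff) => q.
apply: (Sig_cup' (S := OB) (m := 0%N) (FminusC_iff q)) => -[m|] /=.
  by apply: gc_bigcap => n; apply: gc_imp; exact: gc_G_ge.
exact: gc_r_le.
Qed.

Lemma P_Bm_ge : Pi0 (@XB_open R) 3 (@Bminus_ge R).
Proof.
change (Sigma0 (@XB_open R) 3 (~` @Bminus_ge R)).
have -> : ~` @Bminus_ge R = @Bminus_lt R.
  by rewrite /Bminus_ge /Bminus_lt; apply/seteqP; split => p /=; rewrite ltNge => /negP.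
exact: S_Bm_lt.
Qed.

Definition GgtC (m : nat) (q : rat) (i : nat * rat) : set (XB R) :=
  [set _ | (m <= i.1)%N /\ (ratr q : R) < ratr i.2] `&` [set p | ratr i.2 <= G i.1 p].

Lemma GgtC_iff m q p : ~ (forall n, (m <= n)%N -> G n p <= ratr q) <->
  exists i, GgtC m q i p.
Proof.
split.
  move=> h; apply: contrapT => hno; apply: h => n hn; rewrite leNgt; apply/negP => hlt.
  have [t /andP[t1 t2]] := rat_between hlt.
  by apply: hno; exists (n, t); split => //; exact: ltW.
move=> [[n t] [/= [hn ht] htG]] H.
have := H n hn; rewrite leNgt; move/negP; apply.
exact: (lt_le_trans ht htG).
Qed.

Definition Fplt (i : rat * nat) : set (XB R) :=
  [set p | ratr i.1 < rof p] `&` \bigcap_(n : nat) [set p | (i.2 <= n)%N -> G n p <= ratr i.1].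

Lemma Bp_lt_iff (p : XB R) : @Bplus_lt R p <-> exists i, Fplt i p.
Proof.
rewrite /Bplus_lt /Dplus /=.
change (dratio (proj1_sig p.1.1) p.1.2) with (fun n => (G n p)%:E).
apply: iff_trans (D3 _ _) _; split.
  by move=> [q [m [h1 H]]]; exists (q, m); split => // n _; exact: H.
by move=> [[q m] [h1 H]]; exists q, m; split => // n; exact: H.
Qed.

Definition FpltC (i : rat * nat) (o : option (nat * rat)) : set (XB R) :=
  if o is Some j then GgtC i.2 i.1 j else [set p | rof p <= ratr i.1].

Lemma FpltC_iff i p : (~` Fplt i) p <-> exists o, FpltC i o p.
Proof.
split.
  move=> h; case: (lerP (rof p) (ratr i.1)) => hr; first by exists None.
  have : ~ (forall n, (i.2 <= n)%N -> G n p <= ratr i.1).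
    by move=> H; apply: h; split => // n _; exact: H.
  by move=> /GgtC_iff [j hj]; exists (Some j).
move=> [[j|] H] [hq Hall].
  have := proj2 (GgtC_iff i.2 i.1 p) (ex_intro _ j H); apply => n hn.
  exact: Hall n I hn.
by move: H => /=; rewrite leNgt hq.
Qed.

Lemma S_Bp_lt : Sigma0 (@XB_open R) 3 (@Bplus_lt R).
Proof.
change (SigmaAux (gen_open OB) 2 (@Bplus_lt R)).
apply: (Sig_cup' (S := OB) (m := 1%N) Bp_lt_iff) => i.
apply: (Sig_cup' (S := OB) (m := 0%N) (FpltC_iff i)) => -[j|] /=.
  by apply: gc_I; [exact: gc_const|exact: gc_G_ge].
exact: gc_r_le.
Qed.

Lemma P_Bp_ge : Pi0 (@XB_open R) 3 (@Bplus_ge R).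
Proof.
change (Sigma0 (@XB_open R) 3 (~` @Bplus_ge R)).
have -> : ~` @Bplus_ge R = @Bplus_lt R.
  by rewrite /Bplus_ge /Bplus_lt; apply/seteqP; split => p /=; rewrite ltNge => /negP.
exact: S_Bp_lt.
Qed.


Definition Fpgt (q : rat) : set (XB R) :=
  [set p | rof p < ratr q] `&` \bigcap_(m : nat) [set p | exists n, (m <= n)%N /\ ratr q < G n p].

Lemma Bp_gt_iff (p : XB R) : @Bplus_gt R p <-> exists q : rat, Fpgt q p.
Proof.
rewrite /Bplus_gt /Dplus /=.
change (dratio (proj1_sig p.1.1) p.1.2) with (fun n => (G n p)%:E).
apply: iff_trans (D4 _ _) _; split.
  by move=> [q [h1 H]]; exists q; split => // m _; exact: H.
by move=> [q [h1 H]]; exists q; split => // m; exact: H.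
Qed.

Definition FpgtC (q : rat) (o : option nat) : set (XB R) :=
  if o is Some m then \bigcap_(n : nat) [set p | (m <= n)%N -> G n p <= ratr q]
  else [set p | ratr q <= rof p].

Lemma FpgtC_iff q p : (~` Fpgt q) p <-> exists o, FpgtC q o p.
Proof.
split.
  move=> h; case: (lerP (ratr q) (rof p)) => hr; first by exists None.
  apply: contrapT => hno; apply: h; split => // m _; apply: contrapT => hm.
  apply: hno; exists (Some m) => n _ hn; rewrite leNgt; apply/negP => hlt.
  by apply: hm; exists n.
move=> [[m|] H] [hq Hall].
  have [n [hn hlt]] := Hall m I; have := H n I hn; rewrite leNgt hlt //.
by move: H => /=; rewrite leNgt hq.
Qed.

Lemma Fpgt_compl q : SigmaAux (gen_open OB) 2 (~` Fpgt q).
Proof.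
apply: (Sig_cup' (S := OB) (m := 1%N) (FpgtC_iff q)) => -[m|] /=.
  have hi : forall p : XB R, (~` \bigcap_(n : nat) [set p | (m <= n)%N -> G n p <= ratr q]) p <->
      exists i, GgtC m q i p.
    move=> p; split.
      by move=> h; apply/GgtC_iff => H; apply: h => n _; exact: H.
    by move=> /GgtC_iff h H; apply: h => n; exact: H n I.
  apply: (Sig_cup' (S := OB) (m := 0%N) hi) => i.
  by apply: gc_I; [exact: gc_const|exact: gc_G_ge].
have hi : forall p : XB R, (~` [set p | ratr q <= rof p]) p <->
    exists t : rat, ([set p | rof p <= ratr t] `&` [set _ | (ratr t : R) < ratr q]) p.
  move=> p; split.
    move=> /= h; have hlt : rof p < ratr q by rewrite ltNge; apply/negP.
    by have [t /andP[t1 t2]] := rat_between hlt; exists t; split => //; exact: ltW.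
  move=> [t [/= h1 h2]] h; have := le_lt_trans h1 h2; rewrite ltNge h //.
apply: (Sig_cup' (S := OB) (m := 0%N) hi) => t.
by apply: gc_I; [exact: gc_r_le|exact: gc_const].
Qed.

Lemma S_Bp_gt : Sigma0 (@XB_open R) 4 (@Bplus_gt R).
Proof.
change (SigmaAux (gen_open OB) 3 (@Bplus_gt R)).
apply: (Sig_cup' (S := OB) (m := 2%N) Bp_gt_iff) => q.
exact: Fpgt_compl.
Qed.

Lemma P_Bp_le : Pi0 (@XB_open R) 4 (@Bplus_le R).
Proof.
change (Sigma0 (@XB_open R) 4 (~` @Bplus_le R)).
by rewrite /Bplus_le setC_lee; exact: S_Bp_gt.
Qed.

Lemma Fminus_compl2 q : SigmaAux (gen_open OB) 2 (~` Fminus q).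
Proof.
apply: (Sig_cup' (S := OB) (m := 1%N) (FminusC_iff q)) => -[m|] /=.
  have hi : forall p : XB R, (~` \bigcap_(n : nat) [set p | (m <= n)%N -> ratr q <= G n p]) p <->
      exists i : nat * (seq bool * seq (seq bool)),
        ([set _ | (m <= i.1)%N] `&` Cset i.1 (ratr q) i.2) p.
    move=> p; split.
      move=> h; apply: contrapT => hno; apply: h => n _ hn; rewrite leNgt; apply/negP.
      by move=> /G_lt_iff [sL hsL]; apply: hno; exists (n, sL).
    move=> [[n sL] [/= hn hC]] H; have := H n I hn; rewrite leNgt.
    by rewrite (proj2 (G_lt_iff _ _ _) (ex_intro _ sL hC)).
  apply: (Sig_cup' (S := OB) (m := 0%N) hi) => i.
  by apply: gc_I; [exact: gc_const|exact: gc_Cset].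
have hi : forall p : XB R, (~` [set p | rof p <= ratr q]) p <->
    exists t : rat, ([set _ | (ratr q : R) < ratr t] `&` [set p | ratr t <= rof p]) p.
  move=> p; split.
    move=> /= h; have hlt : ratr q < rof p by rewrite ltNge; apply/negP.
    by have [t /andP[t1 t2]] := rat_between hlt; exists t; split => //; exact: ltW.
  move=> [t [/= h1 h2]] h; have := lt_le_trans h1 h2; rewrite ltNge h //.
apply: (Sig_cup' (S := OB) (m := 0%N) hi) => t.
by apply: gc_I; [exact: gc_const|exact: gc_r_ge].
Qed.

Definition Feq (i : rat + rat) : set (XB R) :=
  match i with inl q => Fpgt q | inr q => Fminus q end.

Lemma Beq_iff (p : XB R) : (~` @B_eq R) p <-> exists i, Feq i p.
Proof.
have e1 : @Bplus_gt R p <-> ~ @Bplus_le R p.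
  by rewrite /Bplus_gt /Bplus_le /= ltNge; split => /negP.
have e2 : @Bminus_lt R p <-> ~ @Bminus_ge R p.
  by rewrite /Bminus_lt /Bminus_ge /= ltNge; split => /negP.
split.
  move=> h; case: (pselect (@Bplus_le R p)) => h1.
    have : ~ @Bminus_ge R p by move=> h2; apply: h; split.
    by move=> /e2/Bm_lt_iff [q hq]; exists (inr q).
  by move: h1 => /e1/Bp_gt_iff [q hq]; exists (inl q).
move=> [[q|q] /= hq] [h1 h2].
  by apply: (proj1 e1); [apply/Bp_gt_iff; exists q|].
by apply: (proj1 e2); [apply/Bm_lt_iff; exists q|].
Qed.

Lemma P_Beq : Pi0 (@XB_open R) 4 (@B_eq R).
Proof.
change (SigmaAux (gen_open OB) 3 (~` @B_eq R)).
apply: (Sig_cup' (S := OB) (m := 2%N) Beq_iff) => -[q|q] /=.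
  exact: Fpgt_compl.
exact: Fminus_compl2.
Qed.

End Bpart.

Section Apart.
Context {R : realType}.
Local Notation OA := (@XA_sub R).

Definition KA (p : XA R) : set cantor_space := proj1_sig p.1.1.1.
Lemma KA_compact p : compact (KA p). Proof. exact: (proj2_sig p.1.1.1). Qed.
Definition rA (p : XA R) : R := proj1_sig p.2.
Definition sA (p : XA R) : seq bool := restr p.1.1.2 p.1.2.
Definition MA (p : XA R) : R := MM (sA p) (KA p).

Lemma muKN_MA p : @mu R (KA p `&` cyl (sA p)) = (MA p)%:E.
Proof. by rewrite /MA /MM mu_fin. Qed.

Lemma XA_Ksub U : open U -> gen_open OA [set p | KA p `<=` U].
Proof.
move=> oU; apply: go_sub; left; exists [set K : Kspace | proj1_sig K `<=` U].
by split => //; exists U; split => //; left.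
Qed.

Lemma XA_Kmeet U : open U -> gen_open OA [set p | KA p `&` U !=set0].
Proof.
move=> oU; apply: go_sub; left; exists [set K : Kspace | proj1_sig K `&` U !=set0].
by split => //; exists U; split => //; right.
Qed.

Lemma XA_z U : open U -> gen_open OA [set p | U p.1.1.2].
Proof. by move=> oU; apply: go_sub; right; left; exists U. Qed.

Lemma XA_n N : gen_open OA [set p | N p.1.2].
Proof. by apply: go_sub; right; right; left; exists N. Qed.

Lemma XA_r U : open U -> gen_open OA [set p | U (rA p)].
Proof. by move=> oU; apply: go_sub; right; right; right; exists U. Qed.

Lemma gcA_r_le c : gc OA [set p | rA p <= c].
Proof.
rewrite /gc; have -> : ~` [set p | rA p <= c] = [set p | [set x | c < x] (rA p)].
  by apply/seteqP; split => p /=; rewrite ltNge => /negP.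
apply: XA_r; exact: open_gt.
Qed.

Lemma gcA_r_ge c : gc OA [set p | c <= rA p].
Proof.
rewrite /gc; have -> : ~` [set p | c <= rA p] = [set p | [set x | x < c] (rA p)].
  by apply/seteqP; split => p /=; rewrite ltNge => /negP.
apply: XA_r; exact: open_lt.
Qed.

Lemma gcA_z s : gc OA [set p | cyl s p.1.1.2].
Proof. by apply: (XA_z (U := ~` cyl s)); rewrite openC; exact: cyl_closed. Qed.

Lemma gcA_n k : gc OA [set p | p.1.2 = k].
Proof. exact: (XA_n (N := ~` [set k])). Qed.

Lemma gcA_cov s L : gc OA [set p | KA p `&` cyl s `<=` covL L].
Proof.
rewrite /gc; have -> : ~` [set p | KA p `&` cyl s `<=` covL L] =
    [set p | KA p `&` (cyl s `&` ~` covL L) !=set0].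
  apply/seteqP; split => p /=.
    move=> h; apply: contrapT => h2; apply: h => x [Kx cx]; apply: contrapT => nx.
    by apply: h2; exists x.
  by move=> [x [Kx [cx nx]]] h; exact: nx (h x (conj Kx cx)).
apply: XA_Kmeet; apply: openI; first exact: cyl_open.
by rewrite openC; exact: covL_closed.
Qed.

Lemma A_usc p c : MA p < c -> exists B w, gen_open OA B /\ B p /\ w < c /\
  forall p', B p' -> MA p' <= w.
Proof.
set s := sA p => hp.
move: hp => /(MM_KEY _ _ (KA_compact (p:=p))) [L [hL hw]].
exists ([set p' | cyl s p'.1.1.2] `&` ([set p' | p'.1.2 = p.1.2] `&`
         [set p' | KA p' `<=` covL L `|` ~` cyl s])), (wL L).
split.
  apply: go_I; first exact: XA_z (@cyl_open s).
  apply: go_I; first exact: (XA_n (N := [set k | k = p.1.2])).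
  by apply: XA_Ksub; apply: openU; [exact: covL_open|rewrite openC; exact: cyl_closed].
split.
  split; first exact: cyl_restr.
  split => //.
  move=> x Kx; case: (pselect (cyl s x)) => hx; last by right.
  by left; apply: hL.
split => // p' [hz [hn hK]].
have hs : sA p' = s by rewrite /sA hn; exact: restr_eq.
rewrite /MA hs; apply: MM_le => x [Kx cx].
by case: (hK x Kx).
Qed.

Lemma goA_lt c : gen_open OA [set p | MA p < c].
Proof.
refine (@go_local _ OA _ _) => p /A_usc [B [w [oB [Bp [hw H]]]]].
by exists B; split => //; split => // p' /H h; exact: le_lt_trans hw.
Qed.

Lemma gcA_M_ge c : gc OA [set p | c <= MA p].
Proof.
rewrite /gc; have -> : ~` [set p | c <= MA p] = [set p | MA p < c].
  by apply/seteqP; split => p /=; rewrite ltNge => /negP.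
exact: goA_lt.
Qed.

Lemma A_lt_eq : @A_lt R = [set p | MA p < rA p].
Proof. by apply/seteqP; split => p /=; rewrite /A_lt /= -/(KA p) -/(sA p) muKN_MA lte_fin. Qed.


Lemma A_le_eq : @A_le R = [set p | MA p <= rA p].
Proof. by apply/seteqP; split => p /=; rewrite /A_le /= -/(KA p) -/(sA p) muKN_MA lee_fin. Qed.
Lemma A_ge_eq : @A_ge R = [set p | rA p <= MA p].
Proof. by apply/seteqP; split => p /=; rewrite /A_ge /= -/(KA p) -/(sA p) muKN_MA lee_fin. Qed.
Lemma A_gt_eq : @A_gt R = [set p | rA p < MA p].
Proof. by apply/seteqP; split => p /=; rewrite /A_gt /= -/(KA p) -/(sA p) muKN_MA lte_fin. Qed.

Lemma S_A_lt : Sigma0 (@XA_open R) 1 (@A_lt R).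
Proof.
change (gen_open OA (@A_lt R)); rewrite A_lt_eq.
refine (@go_local _ OA _ _) => p /A_usc [B [w [oB [Bp [hw H]]]]].
exists (B `&` [set p' | [set x | w < x] (rA p')]); split.
  by apply: go_I => //; apply: XA_r; exact: open_gt.
split; first by split.
by move=> p' [/H h1 /= h2]; exact: le_lt_trans h1 h2.
Qed.

Lemma P_A_ge : Pi0 (@XA_open R) 1 (@A_ge R).
Proof.
change (Sigma0 (@XA_open R) 1 (~` @A_ge R)).
have -> : ~` @A_ge R = @A_lt R.
  by rewrite A_ge_eq A_lt_eq; apply/seteqP; split => p /=; rewrite ltNge => /negP.
exact: S_A_lt.
Qed.

Definition Fagt (i : rat * rat) : set (XA R) :=
  [set p | rA p <= ratr i.1] `&` ([set _ | (ratr i.1 : R) < ratr i.2] `&` [set p | ratr i.2 <= MA p]).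

Lemma A_gt_iff p : rA p < MA p <-> exists i, Fagt i p.
Proof.
split.
  move=> h; have [q' /andP[h1 h2]] := rat_between h.
  have [q /andP[h3 h4]] := rat_between h2.
  by exists (q', q); split; [exact: ltW|split => //; exact: ltW].
move=> [[q' q] [/= h1 [h2 h3]]].
exact: (le_lt_trans h1 (lt_le_trans h2 h3)).
Qed.

Lemma S_A_gt : Sigma0 (@XA_open R) 2 (@A_gt R).
Proof.
change (SigmaAux (gen_open OA) 1 (@A_gt R)); rewrite A_gt_eq.
apply: (Sig_cup' (S := OA) (m := 0%N) A_gt_iff) => i.
apply: gc_I; first exact: gcA_r_le.
by apply: gc_I; [exact: gc_const|exact: gcA_M_ge].
Qed.

Lemma P_A_le : Pi0 (@XA_open R) 2 (@A_le R).
Proof.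
change (Sigma0 (@XA_open R) 2 (~` @A_le R)).
have -> : ~` @A_le R = @A_gt R.
  by rewrite A_le_eq A_gt_eq; apply/seteqP; split => p /=; rewrite ltNge => /negP.
exact: S_A_gt.
Qed.

Definition Falt (i : seq bool * seq (seq bool) * rat) : set (XA R) :=
  [set p | cyl i.1.1 p.1.1.2] `&` ([set p | p.1.2 = size i.1.1] `&`
  ([set p | KA p `&` cyl i.1.1 `<=` covL i.1.2] `&`
  ([set _ | wL i.1.2 < (ratr i.2 : R)] `&` [set p | ratr i.2 <= rA p]))).

Definition Faeq (i : (rat * rat) + (seq bool * seq (seq bool) * rat)) : set (XA R) :=
  match i with inl j => Fagt j | inr j => Falt j end.

Lemma A_eq_iff p : (~` @A_eq R) p <-> exists i, Faeq i p.
Proof.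
rewrite /A_eq A_le_eq A_ge_eq /=; split.
  move=> h; case: (lerP (MA p) (rA p)) => hr.
    have hlt : MA p < rA p.
      by rewrite lt_neqAle hr andbT; apply/eqP => he; apply: h; rewrite he.
    move: hlt => /(MM_KEY _ _ (KA_compact (p:=p))) [L [hL hw]].
    have [q /andP[h1 h2]] := rat_between hw.
    exists (inr (sA p, L, q)); split; first exact: cyl_restr.
    split; first by rewrite /sA size_mkseq.
    by split => //; split => //; exact: ltW.
  by have [i hi] := (proj1 (A_gt_iff p)) hr; exists (inl i).
move=> [[j|[[s L] q]] /= hj] [h1 h2].
  have := (proj2 (A_gt_iff p)) (ex_intro _ j hj); rewrite ltNge h1 //.
move: hj => [hz [hn [hc [hw hq]]]].
have hs : sA p = s by rewrite /sA; apply: restr_of_cyl => //; rewrite hn.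
have : MA p <= wL L by rewrite /MA hs; exact: MM_le.
move=> hM; have := le_trans h2 hM; have := lt_le_trans hw hq; lra.
Qed.

Lemma P_A_eq : Pi0 (@XA_open R) 2 (@A_eq R).
Proof.
change (SigmaAux (gen_open OA) 1 (~` @A_eq R)).
apply: (Sig_cup' (S := OA) (m := 0%N) A_eq_iff) => -[j|j] /=.
  apply: gc_I; first exact: gcA_r_le.
  by apply: gc_I; [exact: gc_const|exact: gcA_M_ge].
apply: gc_I; first exact: gcA_z.
apply: gc_I; first exact: gcA_n.
apply: gc_I; first exact: gcA_cov.
by apply: gc_I; [exact: gc_const|exact: gcA_r_ge].
Qed.

End Apart.

Local Close Scope ring_scope.
Local Close Scope classical_set_scope.

Theorem lemma3p1 (R : realType) :
  (* (a) *)
  (Sigma0 (@XA_open R) 1 (@A_lt R) /\ Pi0 (@XA_open R) 1 (@A_ge R) /\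
   Pi0 (@XA_open R) 2 (@A_le R) /\ Sigma0 (@XA_open R) 2 (@A_gt R) /\
   Pi0 (@XA_open R) 2 (@A_eq R)) /\
  (* (b) *)
  (Pi0 (@XB_open R) 2 (@Bminus_le R) /\
   Pi0 (@XB_open R) 3 (@Bminus_ge R) /\ Pi0 (@XB_open R) 3 (@Bplus_ge R) /\
   Pi0 (@XB_open R) 4 (@Bplus_le R) /\
   Sigma0 (@XB_open R) 2 (@Bminus_gt R) /\
   Sigma0 (@XB_open R) 3 (@Bminus_lt R) /\ Sigma0 (@XB_open R) 3 (@Bplus_lt R) /\
   Sigma0 (@XB_open R) 4 (@Bplus_gt R) /\
   Pi0 (@XB_open R) 4 (@B_eq R)).
Proof.
split.
  split; first exact: S_A_lt.
  split; first exact: P_A_ge.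
  split; first exact: P_A_le.
  split; first exact: S_A_gt.
  exact: P_A_eq.
split; first exact: P_Bm_le.
split; first exact: P_Bm_ge.
split; first exact: P_Bp_ge.
split; first exact: P_Bp_le.
split; first exact: S_Bm_gt.
split; first exact: S_Bm_lt.
split; first exact: S_Bp_lt.
split; first exact: S_Bp_gt.
exact: P_Beq.
Qed.
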